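(* Let $c>0$, $f_s>0$, let $M,N,K\geq 1$ be integers, set $T_{\max}=(N-1)/f_s$, and let $\bm{r}^{\mathrm{mic}}_1,\dots,\bm{r}^{\mathrm{mic}}_M\in\mathbb{R}^3$ be microphone positions with $E_M=\{\bm{r}^{\mathrm{mic}}_m: 1\le m\le M\}$. Let $\kappa:\mathbb{R}\to\mathbb{R}$ be continuous with $\kappa(0)>0$ and $\lim_{|t|\to+\infty}\kappa(t)=0$. Let $\bm{x}=(x_{m,n})_{1\le m\le M,\,0\le n\le N-1}\in\mathbb{R}^{MN}$, and assume that $\Gamma^K$ is amplitude lower-bounded with constant $C>0$. Define $$\phi=\inf_{t>0}\sum_{n=0}^{N-1}\frac{\kappa(n/f_s)\,\kappa(n/f_s-t)}{4\pi c t},\qquad \mu_m=\sum_{n=0}^{N-1}x_{m,n}\kappa(n/f_s)\quad(1\le m\le M).$$ Then the problem $$\inf_{(\bm{a},\bm{r})\in\mathbb{R}_+^K\times\mathscr{C}^K} T(\bm{a},\bm{r}),\qquad T(\bm{a},\bm{r})=\frac12\Big\|\bm{x}-\sum_{k=1}^K a_k\gamma(\bm{r}_k)\Big\|_2^2,$$ has a solution (i.e. the infimum is attained) whenever one of the following holds: (i) $\phi<0$ and $\mu_m\le \frac{2}{C}\phi\|\bm{x}\|_2$ for all $m\in\{1,\dots,M\}$; (ii) $\phi\ge 0$ and $\mu_m\le 0$ for all $m\in\{1,\dots,M\}$.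
   Context: $\mathbb{R}_+=[0,+\infty)$ and $\|\cdot\|_2$ is the Euclidean norm. For $\bm{r}\in\mathbb{R}^3\setminus E_M$, $\gamma(\bm{r})\in\mathbb{R}^{MN}$ has components $\gamma_{m,n}(\bm{r})=\dfrac{\kappa\big(n/f_s-\|\bm{r}-\bm{r}^{\mathrm{mic}}_m\|_2/c\big)}{4\pi\|\bm{r}-\bm{r}^{\mathrm{mic}}_m\|_2}$ for $1\le m\le M$, $0\le n\le N-1$. The set $\mathscr{C}=\bigcap_{m=1}^M\overline{B(\bm{r}^{\mathrm{mic}}_m,cT_{\max})}\setminus E_M$ (closed Euclidean balls). For $\bm{a}=(a_k)\in\mathbb{R}_+^K$ and $\bm{r}=(\bm{r}_k)\in\mathscr{C}^K$, $\Gamma^K(\bm{a},\bm{r})=\sum_{k=1}^K a_k\gamma(\bm{r}_k)$. $\Gamma^K$ is called amplitude lower-bounded with constant $C>0$ if $\|\Gamma^K(\bm{a},\bm{r})\|_2\ge C\sum_{k=1}^K a_k$ for all $(\bm{a},\bm{r})\in\mathbb{R}_+^K\times\mathscr{C}^K$. *)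

(* Defs.v *)
From HB Require Import structures.
From mathcomp Require Import all_boot all_order all_algebra.
From mathcomp Require Import all_classical all_reals all_analysis.
Import Order.TTheory GRing.Theory Num.Theory.
Import numFieldNormedType.Exports.
Local Open Scope classical_set_scope.
Local Open Scope ring_scope.

Section Defs.
Variable R : realType.

Definition pt3 := 'I_3 -> R.

Definition dist3 (u v : pt3) : R := Num.sqrt (\sum_(i < 3) (u i - v i) ^+ 2).

Definition norm2 (M N : nat) (y : 'I_M -> 'I_N -> R) : R :=
  Num.sqrt (\sum_(m < M) \sum_(n < N) (y m n) ^+ 2).

Definition gamma (M N : nat) (c fs : R) (kappa : R -> R) (mic : 'I_M -> pt3)
    (r : pt3) : 'I_M -> 'I_N -> R :=
  fun m n => kappa (n%:R / fs - dist3 r (mic m) / c) / (4 * pi * dist3 r (mic m)).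

Definition Tmax (N : nat) (fs : R) : R := (N%:R - 1) / fs.

Definition inC (M N : nat) (c fs : R) (mic : 'I_M -> pt3) (r : pt3) : Prop :=
  (forall m : 'I_M, dist3 r (mic m) <= c * Tmax N fs) /\
  (forall m : 'I_M, r <> mic m).

Definition GammaK (M N K : nat) (c fs : R) (kappa : R -> R)
    (mic : 'I_M -> pt3) (a : 'I_K -> R) (r : 'I_K -> pt3) : 'I_M -> 'I_N -> R :=
  fun m n => \sum_(k < K) a k * gamma M N c fs kappa mic (r k) m n.

Definition amplitude_lower_bounded (M N K : nat) (c fs : R) (kappa : R -> R)
    (mic : 'I_M -> pt3) (C : R) : Prop :=
  forall (a : 'I_K -> R) (r : 'I_K -> pt3),
    (forall k, 0 <= a k) -> (forall k, inC M N c fs mic (r k)) ->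
    C * (\sum_(k < K) a k) <= norm2 M N (GammaK M N K c fs kappa mic a r).

Definition objT (M N K : nat) (c fs : R) (kappa : R -> R) (mic : 'I_M -> pt3)
    (x : 'I_M -> 'I_N -> R) (a : 'I_K -> R) (r : 'I_K -> pt3) : R :=
  2^-1 * (norm2 M N (fun m n => x m n - GammaK M N K c fs kappa mic a r m n)) ^+ 2.

Definition phi (N : nat) (c fs : R) (kappa : R -> R) : R :=
  inf [set (\sum_(n < N) kappa (n%:R / fs) * kappa (n%:R / fs - t) / (4 * pi * c * t))
      | t in [set t : R | 0 < t]].

Definition mu (M N : nat) (fs : R) (kappa : R -> R) (x : 'I_M -> 'I_N -> R)
    (m : 'I_M) : R :=
  \sum_(n < N) x m n * kappa (n%:R / fs).

End Defs.

(* Main.v *)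
Require Import Defs.
From HB Require Import structures.
From mathcomp Require Import all_boot all_order all_algebra.
From mathcomp Require Import all_classical all_reals all_analysis.
From mathcomp Require Import lra ring.
Import Order.TTheory GRing.Theory Num.Theory.
Import numFieldNormedType.Exports.
Local Open Scope classical_set_scope.
Local Open Scope ring_scope.
Section Cont.
Variable R : realType.
Variable T : topologicalType.

Lemma cont_sum n (f : 'I_n -> T -> R) : (forall i, continuous (f i)) ->
  continuous (fun z => \sum_(i < n) f i z).
Proof. move=> h z; apply: cvg_big => //; [exact: add_continuous | by move=> i _; exact: h]. Qed.

Lemma cont_min n (f : 'I_n -> T -> R) (b : R) : (forall i, continuous (f i)) ->
  continuous (fun z => \big[Order.min/b]_(i < n) f i z).
Proof. move=> h z; apply: cvg_big => //; [exact: min_continuous | by move=> i _; exact: h]. Qed.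

Lemma cont_add (f g : T -> R) : continuous f -> continuous g -> continuous (fun z => f z + g z).
Proof. by move=> hf hg z; apply: cvgD; [exact: hf| exact: hg]. Qed.

Lemma cont_opp (f : T -> R) : continuous f -> continuous (fun z => - f z).
Proof. by move=> hf z; apply: cvgN; exact: hf. Qed.

Lemma cont_mul (f g : T -> R) : continuous f -> continuous g -> continuous (fun z => f z * g z).
Proof. by move=> hf hg z; apply: cvgM; [exact: hf| exact: hg]. Qed.

Lemma cont_cst (a : R) : continuous (fun _ : T => a).
Proof. by move=> z; exact: cvg_cst. Qed.

Lemma cont_comp (f : T -> R) (g : R -> R) : continuous f -> continuous g -> continuous (fun z => g (f z)).
Proof. by move=> hf hg z; apply: continuous_comp; [exact: hf | exact: hg]. Qed.

Lemma near_lt (f : T -> R) z0 a : f @ z0 --> f z0 -> f z0 < a -> \forall z \near z0, f z < a.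
Proof. by move=> hf ha; apply: (@cvgr_lt R T (nbhs z0) _ f (f z0) hf). Qed.

Lemma near_gt (f : T -> R) z0 a : f @ z0 --> f z0 -> a < f z0 -> \forall z \near z0, a < f z.
Proof. by move=> hf ha; apply: (@cvgr_gt R T (nbhs z0) _ f (f z0) hf). Qed.

End Cont.
Section QCont.
Variable R : realType.
Variable T : topologicalType.
Variable M : nat.

Lemma q_cont_gen (D : 'I_M -> T -> R) (m : 'I_M) (z0 : T) :
  (forall j, continuous (D j)) -> (forall j z, 0 <= D j z) ->
  (forall j, D j z0 = 0 -> D m z0 = 0 -> forall z, D j z = D m z) ->
  {for z0, continuous (fun z => if D m z == 0 then 1
                             else (\big[Order.min/1]_(j < M) D j z) / D m z)}.
Proof.
move=> Dc D0 Deq; rewrite /prop_for /continuous_at /=.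
have [Dm0|Dmn0] := eqVneq (D m z0) 0.
 
  have near1 : \forall z \near z0, D m z < 1.
    by apply: near_lt; [exact: Dc | rewrite Dm0 ltr01].
  have nearj : \forall z \near z0, forall j, D m z <= D j z.
    apply: filter_forall => j.
    have [Dj0|Djn0] := eqVneq (D j z0) 0.
      by apply: nearW => z; rewrite (Deq j Dj0 Dm0 z).
    have hc : (fun z => D j z - D m z) @ z0 --> D j z0 - D m z0.
      by apply: cvgB; [exact: Dc | exact: Dc].
    have : \forall z \near z0, 0 < D j z - D m z.
      apply: (@near_gt R T (fun z => D j z - D m z) z0 0 hc); rewrite Dm0 subr0 lt_def Djn0 D0 //.
    by apply: filterS => z; rewrite subr_gt0 => /ltW.
  apply: cvg_near_cst; near=> z.
  have Hz1 : D m z < 1 by near: z.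
  have Hzj : forall j, D m z <= D j z by near: z.
  have -> : \big[Order.min/1]_(j < M) D j z = D m z.
    apply/eqP; rewrite eq_le; apply/andP; split; first exact: bigmin_le.
    by apply: le_bigmin => //; exact: ltW.
  by case: eqP => // /eqP h; rewrite divff.
have nearn : \forall z \near z0, D m z != 0.
  have : \forall z \near z0, 0 < D m z.
    by apply: near_gt; [exact: Dc | rewrite lt_def Dmn0 D0].
  by apply: filterS => z /gt_eqF ->.
idtac.
apply: (@cvg_trans _ ((fun z => (\big[Order.min/1]_(j < M) D j z) / D m z) @ z0)).
  apply: near_eq_cvg; near=> z.
  have hz : D m z != 0 by near: z.
  by rewrite (negbTE hz).
apply: cvgM; first exact: cont_min.
by apply: cvgV => //; exact: Dc.
Unshelve. all: by end_near. Qed.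
End QCont.
Import ArrowAsProduct.

Lemma cont_sq (R : realType) (T : topologicalType) (f : T -> R) :
  continuous f -> continuous (fun z => f z ^+ 2).
Proof.
move=> hf; have -> : (fun z => f z ^+ 2) = (fun z => f z * f z).
  by apply: funext => t; rewrite expr2.
exact: cont_mul.
Qed.

Section Dist.
Variable R : realType.

Lemma dist3_ge0 (r s : pt3 R) : 0 <= dist3 R r s.
Proof. exact: sqrtr_ge0. Qed.

Lemma dist3_eq0 (r s : pt3 R) : dist3 R r s = 0 -> r = s.
Proof.
rewrite /dist3 => /eqP; rewrite sqrtr_eq0 => h.
apply: funext => i; apply/eqP; rewrite -subr_eq0 -sqrf_eq0; apply/eqP.
apply/le_anti/andP; split; last exact: sqr_ge0.
apply: le_trans h; rewrite (bigD1 i) //= lerDl; apply: sumr_ge0 => j _.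
exact: sqr_ge0.
Qed.

Lemma dist3_xx (r : pt3 R) : dist3 R r r = 0.
Proof.
rewrite /dist3 big1 ?sqrtr0 // => i _; by rewrite subrr expr0n.
Qed.
End Dist.

Section Main.
Variable R : realType.
Variables (c fs : R) (M N K : nat) (mic : 'I_M -> pt3 R) (kappa : R -> R).
Hypothesis kc : continuous kappa.

Definition dd (r : pt3 R) (m : 'I_M) := dist3 R r (mic m).
Definition rho (r : pt3 R) := \big[Order.min/1]_(m < M) dd r m.
Definition qq m r := if dd r m == 0 then 1 else rho r / dd r m.
Definition hh m (n : 'I_N) r := kappa (n%:R / fs - dd r m / c) * qq m r / (4 * pi).
Definition II := ('I_K * option 'I_3)%type.
Definition ZZ := II -> R.
Definition bz (z : ZZ) k := z (k, None).
Definition rz (z : ZZ) k : pt3 R := fun i => z (k, Some i).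
Definition SS (y : 'I_M -> 'I_N -> R) := \sum_(m < M) \sum_(n < N) (y m n) ^+ 2.
Definition FF x (z : ZZ) :=
  2^-1 * SS (fun m n => x m n - \sum_(k < K) bz z k * hh m n (rz z k)).

Lemma cont_proj (i : II) : continuous (fun z : ZZ => z i).
Proof. exact: (@proj_continuous II (fun _ => R) i). Qed.

Lemma cont_dd k m : continuous (fun z : ZZ => dd (rz z k) m).
Proof.
rewrite /dd /dist3 /rz; apply: cont_comp; last exact: sqrt_continuous.
apply: cont_sum => i; apply: cont_sq; apply: cont_add; first exact: cont_proj.
exact: cont_cst.
Qed.

Lemma cont_rho k : continuous (fun z : ZZ => rho (rz z k)).
Proof. by apply: cont_min => j; exact: cont_dd. Qed.

Lemma cont_qq k m : continuous (fun z : ZZ => qq m (rz z k)).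
Proof.
move=> z0.
apply: (@q_cont_gen R ZZ M (fun j z => dd (rz z k) j) m z0).
- by move=> j; exact: cont_dd.
- by move=> j z; exact: dist3_ge0.
- move=> j /dist3_eq0 hj /dist3_eq0 hm z.
  by rewrite /dd -hj hm.
Qed.

Lemma cont_hh k m n : continuous (fun z : ZZ => hh m n (rz z k)).
Proof.
rewrite /hh; apply: cont_mul; last exact: cont_cst.
apply: cont_mul; last exact: cont_qq.
apply: cont_comp; last exact: kc.
apply: cont_add; first exact: cont_cst.
apply: cont_opp; apply: cont_mul; last exact: cont_cst.
exact: cont_dd.
Qed.

Lemma cont_FF x : continuous (FF x).
Proof.
rewrite /FF /SS; apply: cont_mul; first exact: cont_cst.
apply: cont_sum => m; apply: cont_sum => n; apply: cont_sq.
apply: cont_add; first exact: cont_cst.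
apply: cont_opp; apply: cont_sum => k; apply: cont_mul; last exact: cont_hh.
exact: cont_proj.
Qed.

End Main.
Section PhiBound.
Variable R : realType.
Variables (c fs : R) (N : nat) (kappa : R -> R).
Hypotheses (c0 : 0 < c) (fs0 : 0 < fs) (N1 : (1 <= N)%N) (kc : continuous kappa)
  (k0 : 0 < kappa 0) (kninf : kappa t @[t --> -oo] --> 0).

Lemma kbound (L : R) : exists B, 0 <= B /\ forall u, u <= L -> `|kappa u| <= B.
Proof.
have : \forall t \near -oo, `|kappa t| < 1.
  have hn : (fun t => `|kappa t|) @ -oo --> `|0 : R|.
    by apply: cvg_norm; exact: kninf.
  rewrite normr0 in hn.
  exact: (@cvgr_lt R R (ninfty_nbhs R) _ (fun t => `|kappa t|) 0 hn 1 ltr01).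
case=> A [Areal HA].
pose a := Num.min A L.
have hal : a <= L by rewrite /a ge_min lexx orbT.
have hcont : {within `[a, L], continuous (fun u => `|kappa u|)}.
  apply: continuous_subspaceT => u; apply: cvg_norm; exact: kc.
have [cm _ Hcm] := EVT_max hal hcont.
exists (1 + `|kappa cm|); split; first by rewrite addr_ge0.
move=> u uL; have [uA|Au] := ltP u A.
  by apply: le_trans (ltW (HA u uA)) _; rewrite lerDl.
apply: le_trans (Hcm u _) _; last by rewrite lerDr.
rewrite in_itv /= uL andbT; apply: le_trans Au; rewrite /a ge_min lexx //.
Qed.

Definition gphi (t : R) := \sum_(n < N) kappa (n%:R / fs) * kappa (n%:R / fs - t) / (4 * pi * c * t).

Lemma phi_le t : 0 < t -> phi R N c fs kappa <= gphi t.
Proof.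
move=> t0; rewrite /phi; apply: ge_inf; last by exists t.
pose h (t : R) := \sum_(n < N) kappa (n%:R / fs) * kappa (n%:R / fs - t).
have gh s : 0 < s -> gphi s = h s / (4 * pi * c * s).
  by move=> s0; rewrite /gphi /h mulr_suml.
have [B [B0 HB]] := kbound ((N%:R - 1) / fs).
pose H := \sum_(n < N) `|kappa (n%:R / fs)| * B.
have hc : h @ 0 --> h 0.
  apply: cont_sum => n; apply: cont_mul; first exact: cont_cst.
  apply: cont_comp; last exact: kc.
  by apply: cont_add; [exact: cont_cst | apply: cont_opp => z; exact: cvg_id].
have h00 : 0 < h 0.
  rewrite /h; pose n0 : 'I_N := Ordinal N1.
  rewrite (bigD1 n0) //= mul0r subr0 -expr2 ltr_pwDl ?exprn_gt0 //.
  by apply: sumr_ge0 => n _; rewrite subr0 -expr2 sqr_ge0.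
have := @near_gt R R h 0 0 hc h00; case/(nbhs_ballP 0) => e e0 He.
have H0 : 0 <= H by apply: sumr_ge0 => n _; rewrite mulr_ge0.
have pi0 : 0 < pi :> R by exact: pi_gt0.
exists (- (H / (4 * pi * c * (e / 2)))) => _ [s s0 <-] /=.
rewrite -/(gphi s) gh //.
have den0 : 0 < 4 * pi * c * s by rewrite !mulr_gt0.
have dene : 0 < 4 * pi * c * (e / 2) by rewrite !mulr_gt0 // divr_gt0.
have [se|es] := ltP s (e / 2).
  have : 0 < h s.
    apply: He; rewrite /ball /= sub0r normrN gtr0_norm //.
    by apply: (lt_trans se); rewrite ltr_pdivrMr // ltr_pMr // ltr1n.
  move=> hs0; apply: le_trans (_ : 0 <= _); last by rewrite divr_ge0 // ltW.
  by rewrite oppr_le0 divr_ge0 // ltW.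
have hsH : - H <= h s.
  rewrite /h /H -sumrN; apply: ler_sum => n _.
  have := ler_norm (- (kappa (n%:R / fs) * kappa (n%:R / fs - s))).
  rewrite normrN normrM => h1; rewrite lerNl; apply: le_trans h1 _.
  apply: ler_wpM2l => //; apply: HB.
  rewrite lerBlDr; apply: le_trans (_ : (N%:R - 1) / fs <= _); last by rewrite lerDl ltW.
  rewrite ler_pM2r ?invr_gt0 // lerBrDr.
  by rewrite natr1 ler_nat ltn_ord.
apply: (@le_trans _ _ (- H / (4 * pi * c * s))).
  rewrite !mulNr lerN2 ler_wpM2l // lef_pV2 ?posrE // ler_pM2l //.
  by rewrite !mulr_gt0.
by rewrite ler_pM2r ?invr_gt0.
Qed.
End PhiBound.
Section Basic.
Variable R : realType.
Variables (M N : nat).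
Local Notation SS := (@SS R M N).

Lemma SS_ge0 (y : 'I_M -> 'I_N -> R) : 0 <= SS y.
Proof. by apply: sumr_ge0 => m _; apply: sumr_ge0 => n _; exact: sqr_ge0. Qed.

Lemma norm2_sq (y : 'I_M -> 'I_N -> R) : norm2 R M N y ^+ 2 = SS y.
Proof. by rewrite /norm2 sqr_sqrtr //; exact: SS_ge0. Qed.

Lemma norm2_ge0 (y : 'I_M -> 'I_N -> R) : 0 <= norm2 R M N y.
Proof. exact: sqrtr_ge0. Qed.

Lemma abs_le_sqrt (v S : R) : v ^+ 2 <= S -> `|v| <= Num.sqrt S.
Proof.
move=> h; rewrite -sqrtr_sqr ler_sqrt //; apply: le_trans h; exact: sqr_ge0.
Qed.

Lemma comp_le_norm2 (y : 'I_M -> 'I_N -> R) m n : `|y m n| <= norm2 R M N y.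
Proof.
apply: abs_le_sqrt; rewrite (bigD1 m) //= (bigD1 n) //= -addrA lerDl.
apply: addr_ge0; first by apply: sumr_ge0 => j _; exact: sqr_ge0.
by apply: sumr_ge0 => i _; apply: sumr_ge0 => j _; exact: sqr_ge0.
Qed.

Lemma SS_sub_bound (x g : 'I_M -> 'I_N -> R) :
  SS (fun m n => x m n - g m n) <= SS x ->
  norm2 R M N g <= 2 * norm2 R M N x.
Proof.
move=> h.
have h2 : SS g <= 4 * SS x.
  have : SS g <= 2 * SS x + 2 * SS (fun m n => x m n - g m n).
    rewrite /SS !mulr_sumr -big_split /=; apply: ler_sum => m _.
    rewrite !mulr_sumr -big_split /=; apply: ler_sum => n _.
    rewrite -subr_ge0 (_ : _ - _ = (2 * x m n - g m n) ^+ 2); first exact: sqr_ge0.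
    ring.
  move=> h'; apply: le_trans h' _; lra.
have e2 : Num.sqrt (4:R) = 2.
  by rewrite (_ : (4:R) = 2 ^+ 2) ?sqrtr_sqr ?ger0_norm // expr2 -natrM.
rewrite /norm2 -e2 -sqrtrM // ler_sqrt //.
by apply: mulr_ge0 => //; exact: SS_ge0.
Qed.
Lemma SS_split (y w : 'I_M -> 'I_N -> R) :
  \sum_(m < M) \sum_(n < N) y m n * w m n <= 0 -> SS y <= SS (fun m n => y m n - w m n).
Proof.
move=> h.
have E : SS (fun m n => y m n - w m n) = SS y + SS w - 2 * \sum_(m < M) \sum_(n < N) y m n * w m n.
  rewrite /SS mulr_sumr -!big_split -sumrB; apply: eq_bigr => m _.
  rewrite mulr_sumr -!big_split -sumrB; apply: eq_bigr => n _ /=; ring.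
rewrite E; have := SS_ge0 w; lra.
Qed.
End Basic.

Section Rho.
Variable R : realType.
Variables (M : nat) (mic : 'I_M -> pt3 R).
Local Notation dd := (@dd R M mic).
Local Notation rho := (@rho R M mic).

Lemma rho_ge0 r : 0 <= rho r.
Proof.
rewrite /rho; apply: le_bigmin => [|m _]; [exact: ler01 | exact: dist3_ge0].
Qed.

Lemma rho_le r m : rho r <= dd r m.
Proof. exact: bigmin_le. Qed.

Lemma rho_le1 r : rho r <= 1.
Proof. exact: bigmin_le_id. Qed.

Lemma rho_cases r : rho r = 1 \/ exists m, rho r = dd r m.
Proof.
rewrite /rho; apply: (big_rec (fun y => y = 1 \/ exists m, y = dd r m)); first by left.
move=> m y _ IH; rewrite /Order.min; case: ifP => _; [by right; exists m | exact: IH].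
Qed.
End Rho.

Section Rho2.
Variable R : realType.
Variables (c fs : R) (M N : nat) (mic : 'I_M -> pt3 R) (kappa : R -> R).
Local Notation dd := (@dd R M mic).
Local Notation rho := (@rho R M mic).

Lemma dd_gt0 {r m} : r <> mic m -> 0 < dd r m.
Proof.
move=> h; rewrite lt_def dist3_ge0 andbT; apply/eqP => /dist3_eq0; exact: h.
Qed.

Lemma rho_gt0 r : (forall m, r <> mic m) -> 0 < rho r.
Proof.
move=> h; have [->|[m ->]] := @rho_cases R M mic r; first exact: ltr01.
exact: dd_gt0.
Qed.

Lemma rho0_mic r : rho r = 0 -> exists m, dd r m = 0.
Proof.
move=> h; have [h1|[m hm]] := @rho_cases R M mic r; last by exists m; rewrite -hm.
by move: h; rewrite h1 => /eqP; rewrite oner_eq0.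
Qed.

Lemma hh_gamma m n r : (forall m, r <> mic m) ->
  @hh R c fs M N mic kappa m n r = rho r * gamma R M N c fs kappa mic r m n.
Proof.
move=> h; have d0 := dd_gt0 (h m : r <> mic m).
rewrite /hh /qq (gt_eqF d0) /gamma -/(dd r m).
have := @pi_gt0 R; move: (pi : R) => p p0.
by field; rewrite (gt_eqF d0) (gt_eqF p0).
Qed.

Lemma hh_rho0 m n r : rho r = 0 ->
  @hh R c fs M N mic kappa m n r = if dd r m == 0 then kappa (n%:R / fs) / (4 * pi) else 0.
Proof.
move=> h; rewrite /hh /qq h; case: eqP => [->|_]; last by rewrite mul0r !mulr0 mul0r.
by rewrite mul0r subr0 mulr1.
Qed.
End Rho2.
Arguments rho_gt0 {R M mic r}. Arguments rho0_mic {R M mic r}.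
Arguments hh_gamma {R c fs M N mic kappa m n r}. Arguments hh_rho0 {R c fs M N mic kappa m n r}.
Arguments rho_le {R M mic}. Arguments rho_ge0 {R M mic}. Arguments rho_le1 {R M mic}.
Arguments rho_cases {R M mic}. Arguments comp_le_norm2 {R M N}. Arguments SS_sub_bound {R M N x g}.
Arguments norm2_ge0 {R M N}. Arguments SS_ge0 {R M N}. Arguments dist3_eq0 {R r s}.
Arguments dist3_xx {R}. Arguments SS_split {R M N y w}. Arguments norm2_sq {R M N}.
Section Thm.
Variable R : realType.
Variables (c fs : R) (M N K : nat) (mic : 'I_M -> pt3 R) (kappa : R -> R)
  (x : 'I_M -> 'I_N -> R) (C : R).
Hypotheses (c0 : 0 < c) (fs0 : 0 < fs) (M1 : (1 <= M)%N) (N1 : (1 <= N)%N)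
  (kc : continuous kappa) (k0 : 0 < kappa 0)
  (kninf : kappa t @[t --> -oo] --> 0) (C0 : 0 < C)
  (Hamp : amplitude_lower_bounded R M N K c fs kappa mic C).

Local Notation dd := (@dd R M mic).
Local Notation rho := (@rho R M mic).
Local Notation gam := (gamma R M N c fs kappa mic).
Local Notation Gam := (GammaK R M N K c fs kappa mic).
Local Notation inCC := (inC R M N c fs mic).
Local Notation X := (norm2 R M N x).
Local Notation SA := (2 * X / C).

Lemma pi4_gt0 : 0 < 4 * pi :> R.
Proof. by rewrite mulr_gt0 // pi_gt0. Qed.

Lemma sumA a r : (forall k, 0 <= a k) -> (forall k, inCC (r k)) ->
  norm2 R M N (Gam a r) <= 2 * X -> \sum_(k < K) a k <= SA.
Proof.
move=> ha hr hn; have := Hamp a r ha hr => h.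
by rewrite ler_pdivlMr // mulrC; apply: le_trans hn.
Qed.

Lemma term_lb (a u d delta B : R) : 0 <= a -> 0 < d -> 0 < delta -> 0 <= B ->
  - B <= u -> (d <= delta -> 0 <= u) ->
  - (a * (B / (4 * pi * delta))) <= a * (u / (4 * pi * d)).
Proof.
move=> a0 d0 de0 B0 uB hu; have P0 := pi4_gt0.
have [dde|ded] := leP d delta.
  apply: le_trans (_ : 0 <= _); first by rewrite oppr_le0 mulr_ge0 // divr_ge0 // ltW // mulr_gt0.
  by rewrite mulr_ge0 // divr_ge0 // ?hu // ltW // mulr_gt0.
rewrite -mulrN; apply: ler_wpM2l => //.
apply: le_trans (_ : - B / (4 * pi * d) <= _); last by rewrite ler_pM2r // invr_gt0 mulr_gt0.
rewrite mulNr lerN2 ler_wpM2l // lef_pV2 ?posrE ?mulr_gt0 //; first by rewrite ler_pM2l // ltW.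
all: exact: pi_gt0.
Qed.

Lemma est : exists B0, 0 <= B0 /\ forall a r, (forall k, 0 <= a k) -> (forall k, inCC (r k)) ->
  norm2 R M N (Gam a r) <= 2 * X -> forall k, a k <= B0 * rho (r k).
Proof.
have [B [B0 HB]] := @kbound R kappa kc kninf ((N%:R - 1) / fs).
have : \forall u \near 0, kappa 0 / 2 < kappa u.
  by apply: near_gt; [exact: kc | rewrite ltr_pdivrMr // ltr_pMr // ltr1n].
case/(nbhs_ballP 0) => e e0 He.
pose delta := Num.min 1 (c * e / 2).
have de0 : 0 < delta by rewrite lt_min ltr01 /= divr_gt0 // mulr_gt0.
have de1 : delta <= 1 by rewrite ge_min lexx.
have Hdel s : 0 <= s <= delta -> kappa 0 / 2 < kappa (- (s / c)).
  case/andP => s0 sd; apply: He.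
  have sc0 : 0 <= s / c by rewrite divr_ge0 // ltW.
  rewrite /ball /= sub0r opprK ger0_norm //.
  rewrite ltr_pdivrMr // mulrC; apply: (@le_lt_trans _ _ (c * e / 2)).
    by apply: le_trans sd _; rewrite ge_min lexx orbT.
  by rewrite ltr_pdivrMr // ltr_pMr ?mulr_gt0 // ltr1n.
have HB' s : 0 <= s -> `|kappa (- (s / c))| <= B.
  move=> s0; apply: HB; apply: le_trans (_ : 0 <= _); first by rewrite oppr_le0 divr_ge0 // ltW.
  by apply: divr_ge0; [rewrite subr_ge0 ler1n | exact: ltW].
have X0 : 0 <= X := norm2_ge0 x.
have SA0 : 0 <= SA by apply: divr_ge0; [exact: mulr_ge0 | exact: ltW].
have P0 := pi4_gt0.
pose W := 2 * X + SA * (B / (4 * pi * delta)).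
have BD0 : 0 <= B / (4 * pi * delta) by apply: divr_ge0 => //; apply: ltW; exact: mulr_gt0.
have W0 : 0 <= W by apply: addr_ge0; exact: mulr_ge0.
exists (SA / delta + 2 * (4 * pi) / kappa 0 * W); split.
  apply: addr_ge0; first by apply: divr_ge0 => //; exact: ltW.
  apply: mulr_ge0 => //; apply: divr_ge0; [apply: mulr_ge0 => //; exact: ltW | exact: ltW].
move=> a r ha hr hn k.
have hrk := hr k; have rho0 := rho_gt0 (proj2 hrk).
have sa := sumA a r ha hr hn.
have akS : a k <= SA.
  apply: le_trans sa; rewrite (bigD1 k) //= lerDl; exact: sumr_ge0.
have [der|rde] := leP delta (rho (r k)).
  apply: le_trans (_ : SA / delta * rho (r k) <= _); last first.
    apply: ler_wpM2r; first exact: ltW.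
    rewrite lerDl; apply: mulr_ge0 => //; apply: divr_ge0; [apply: mulr_ge0 => //; exact: ltW | exact: ltW].
  apply: le_trans akS _; apply: (@le_trans _ _ (SA / delta * delta)).
    by rewrite divfK // gt_eqF.
  by apply: ler_wpM2l => //; apply: divr_ge0 => //; exact: ltW.
have [h1|[m0 hm0]] := @rho_cases R M mic (r k).
  by move: rde; rewrite h1 => /lt_le_trans/(_ de1); rewrite ltxx.
pose n0 : 'I_N := Ordinal N1.
have Gle : Gam a r m0 n0 <= 2 * X.
  exact: le_trans (ler_norm _) (le_trans (comp_le_norm2 _ m0 n0) hn).
have terms j : - (a j * (B / (4 * pi * delta))) <= a j * gam (r j) m0 n0.
  rewrite /gamma /=; set d := dist3 R (r j) (mic m0).
  have d0 : 0 < d := @dd_gt0 R M mic _ _ (proj2 (hr j) m0).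
  rewrite mul0r sub0r; apply: term_lb => //.
  - by have := HB' d (ltW d0); rewrite ler_norml => /andP[].
  - move=> dd0; apply: ltW; apply: lt_trans (Hdel d _); first by rewrite divr_gt0.
    by rewrite (ltW d0) dd0.
have termk : a k * (kappa 0 / 2 / (4 * pi * rho (r k))) <= a k * gam (r k) m0 n0.
  rewrite /gamma /= -/(dd (r k) m0) -hm0 mul0r sub0r.
  apply: ler_wpM2l => //; rewrite ler_pM2r; last by rewrite invr_gt0 mulr_gt0.
  by apply: ltW; apply: Hdel; rewrite (ltW rho0) (ltW rde).
have GamE : Gam a r m0 n0 = a k * gam (r k) m0 n0 + \sum_(j < K | j != k) a j * gam (r j) m0 n0.
  by rewrite /GammaK (bigD1 k).
have sumk : \sum_(j < K | j != k) a j <= SA.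
  by apply: le_trans sa; rewrite [X in _ <= X](bigD1 k) //= lerDr.
have restlb : - (SA * (B / (4 * pi * delta))) <= \sum_(j < K | j != k) a j * gam (r j) m0 n0.
  apply: le_trans (_ : \sum_(j < K | j != k) - (a j * (B / (4 * pi * delta))) <= _); last first.
    by apply: ler_sum => j _; exact: terms.
  rewrite sumrN -mulr_suml lerN2; apply: ler_wpM2r => //.
have main : a k * (kappa 0 / 2 / (4 * pi * rho (r k))) <= W.
  rewrite /W; move: Gle; rewrite GamE; move: termk restlb; lra.
have akE : a k = a k * (kappa 0 / 2 / (4 * pi * rho (r k))) * (2 * (4 * pi) / kappa 0 * rho (r k)).
  have := @pi_gt0 R; move: (pi : R) => p p0.
  by field; rewrite (gt_eqF k0) (gt_eqF rho0) (gt_eqF p0).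
rewrite akE; apply: le_trans (_ : W * (2 * (4 * pi) / kappa 0 * rho (r k)) <= _).
  apply: ler_wpM2r => //; apply: mulr_ge0; last exact: ltW.
  by apply: divr_ge0; [apply: mulr_ge0 => //; exact: ltW | exact: ltW].
rewrite (_ : W * (2 * (4 * pi) / kappa 0 * rho (r k)) = (2 * (4 * pi) / kappa 0 * W) * rho (r k)); last by ring.
apply: ler_wpM2r; first exact: ltW.
rewrite lerDr; apply: divr_ge0 => //; exact: ltW.
Qed.


Local Notation bz := (@bz R K).
Local Notation rz := (@rz R K).
Local Notation hh := (@hh R c fs M N mic kappa).
Local Notation cT := (c * Tmax R N fs).
Local Notation Fx := (FF R c fs M N K mic kappa x).

Lemma gam_kappa m r : 0 < dd r m ->
  \sum_(n < N) gam r m n * kappa (n%:R / fs) = gphi R c fs N kappa (dd r m / c).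
Proof.
move=> d0; rewrite /gphi; apply: eq_bigr => n _; rewrite /gamma -/(dd r m).
have := @pi_gt0 R; move: (pi : R) => p p0.
by field; rewrite (gt_eqF d0) (gt_eqF p0) (gt_eqF c0).
Qed.

Lemma closed_ge_cont (f : ZZ R K -> R) a : continuous f -> closed [set z | a <= f z].
Proof.
move=> hf; rewrite (_ : [set z | a <= f z] = f @^-1` [set y | a <= y]) //.
by apply: preimage_closed => [z _|]; [exact: hf | exact: closed_ge].
Qed.

Lemma closed_le_cont (f : ZZ R K -> R) a : continuous f -> closed [set z | f z <= a].
Proof.
move=> hf; rewrite (_ : [set z | f z <= a] = f @^-1` [set y | y <= a]) //.
by apply: preimage_closed => [z _|]; [exact: hf | exact: closed_le].
Qed.

Lemma abs_le_dist (r s : pt3 R) i : `|r i - s i| <= dist3 R r s.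
Proof.
apply: abs_le_sqrt; rewrite (bigD1 i) //= lerDl; apply: sumr_ge0 => j _; exact: sqr_ge0.
Qed.

Hypothesis Hcase :
  (phi R N c fs kappa < 0 /\
      forall m : 'I_M, mu R M N fs kappa x m <= 2 / C * phi R N c fs kappa * norm2 R M N x)
   \/ (0 <= phi R N c fs kappa /\ forall m : 'I_M, mu R M N fs kappa x m <= 0).

Lemma Ybound a r : (forall k, 0 <= a k) -> (forall k, inCC (r k)) -> \sum_(k < K) a k <= SA ->
  forall m, \sum_(n < N) (x m n - Gam a r m n) * kappa (n%:R / fs) <= 0.
Proof.
move=> ha hr hs m.
have E : \sum_(n < N) (x m n - Gam a r m n) * kappa (n%:R / fs) =
    mu R M N fs kappa x m - \sum_(k < K) a k * gphi R c fs N kappa (dd (r k) m / c).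
  rewrite /mu; under eq_bigr do rewrite mulrBl.
  rewrite sumrB; congr (_ - _).
  rewrite /GammaK; under eq_bigr do rewrite mulr_suml.
  rewrite exchange_big /=; apply: eq_bigr => k _.
  rewrite -gam_kappa; last exact: (@dd_gt0 R M mic _ _ (proj2 (hr k) m)).
  by rewrite mulr_sumr; apply: eq_bigr => n _; rewrite -mulrA.
have lb : phi R N c fs kappa * \sum_(k < K) a k <=
    \sum_(k < K) a k * gphi R c fs N kappa (dd (r k) m / c).
  rewrite mulr_sumr; apply: ler_sum => k _; rewrite mulrC; apply: ler_wpM2l => //.
  apply: phi_le => //; apply: divr_gt0 => //; exact: (@dd_gt0 R M mic _ _ (proj2 (hr k) m)).
rewrite E.
have sa0 : 0 <= \sum_(k < K) a k by apply: sumr_ge0.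
case: Hcase => [[ph hm]|[ph hm]].
  have := hm m.
  have : phi R N c fs kappa * SA <= phi R N c fs kappa * \sum_(k < K) a k.
    by rewrite ler_nM2l.
  have -> : 2 / C * phi R N c fs kappa * X = phi R N c fs kappa * SA.
    by ring.
  move: lb; lra.
have := hm m; have : 0 <= phi R N c fs kappa * \sum_(k < K) a k by apply: mulr_ge0.
move: lb; lra.
Qed.

Lemma main_thm (r0 : pt3 R) (hr0 : inCC r0) :
  exists (a : 'I_K -> R) (r : 'I_K -> pt3 R), (forall k, 0 <= a k) /\ (forall k, inCC (r k)) /\
    forall a' r', (forall k, 0 <= a' k) -> (forall k, inCC (r' k)) ->
      objT R M N K c fs kappa mic x a r <= objT R M N K c fs kappa mic x a' r'.
Proof.
have [B0 [B00 HB0]] := est.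
pose m0 : 'I_M := Ordinal M1.
pose D : set (ZZ R K) :=
  (\bigcap_(k in [set: 'I_K]) [set z | 0 <= bz z k]) `&`
  (\bigcap_(k in [set: 'I_K]) [set z | bz z k <= B0]) `&`
  (\bigcap_(p in [set: 'I_K * 'I_M]) [set z | dd (rz z p.1) p.2 <= cT]) `&`
  [set z | C * \sum_(k < K) bz z k * rho (rz z k) <= 2 * X].
have Dcl : closed D.
  apply: closedI; [apply: closedI; [apply: closedI|]|].
  - apply: closed_bigI => k _; apply: (closed_ge_cont (fun z => bz z k)).
    exact: (@cont_proj R K (k, None)).
  - apply: closed_bigI => k _; apply: (closed_le_cont (fun z => bz z k)).
    exact: (@cont_proj R K (k, None)).
  - apply: closed_bigI => p _; apply: (closed_le_cont (fun z => dd (rz z p.1) p.2)).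
    exact: (@cont_dd R M K mic p.1 p.2).
  - apply: (closed_le_cont (fun z => C * \sum_(k < K) bz z k * rho (rz z k))).
    apply: cont_mul; first exact: cont_cst.
    apply: cont_sum => k; apply: cont_mul; first exact: (@cont_proj R K (k, None)).
    exact: (@cont_rho R M K mic k).
pose A : II K -> set R := fun p => if p.2 is Some i then `[mic m0 i - cT, mic m0 i + cT]%classic
  else `[0, B0]%classic.
have Bcomp : compact [set z : ZZ R K | forall i, A i (z i)].
  apply: (@tychonoff (II K) (fun _ => R) A) => -[k [i|]] /=; exact: segment_compact.
have DB : D `<=` [set z : ZZ R K | forall i, A i (z i)].
  move=> z [[[H1 H2] H3] H4] [k [i|]] /=.
  - rewrite /A /= in_itv /= -ler_distlC distrC.
    apply: le_trans (abs_le_dist (rz z k) (mic m0) i) _; exact: (H3 (k, m0)).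
  - by rewrite /A /= in_itv /= (H1 k) // (H2 k).
have Dcomp : compact D := subclosed_compact Dcl Bcomp DB.
pose z0 : ZZ R K := fun p => if p.2 is Some i then r0 i else 0.
have X0 : 0 <= X := norm2_ge0 x.
have Dz0 : D z0.
  split; [split; [split|]|].
  - by move=> k _ /=.
  - by move=> k _ /=.
  - by move=> p _ /=; exact: (proj1 hr0 p.2).
  - rewrite /= big1 ?mulr0; first by apply: mulr_ge0.
    by move=> k _; rewrite /bz /= mul0r.
have Fc : {within D, continuous Fx}.
  by apply: continuous_subspaceT; exact: (@cont_FF R c fs M N K mic kappa kc x).
have [zs Dzs Hmin] := compact_EVT_min (ex_intro _ z0 Dz0) Dcomp Fc.
move: Dzs; rewrite inE => -[[[hb0 hbB] hdd] hsum].
have Fz0 : Fx z0 = 2^-1 * X ^+ 2.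
  rewrite /FF norm2_sq; congr (_ * _); rewrite /SS; apply: eq_bigr => m _; apply: eq_bigr => n _.
  by rewrite big1 ?subr0 // => k _; rewrite /bz /= mul0r.
pose good k := 0 < rho (rz zs k).
pose a k := if good k then bz zs k * rho (rz zs k) else 0.
pose r k := if good k then rz zs k else r0.
have ha k : 0 <= a k.
  rewrite /a; case: ifP => // _; apply: mulr_ge0; [exact: (hb0 k) | exact: rho_ge0].
have notmic k : good k -> forall m, rz zs k <> mic m.
  move=> g m hm; have h0 : dd (rz zs k) m = 0 by rewrite /dd hm dist3_xx.
  have := @rho_le R M mic (rz zs k) m; rewrite h0 => h.
  by move: g; rewrite /good => /lt_le_trans/(_ h); rewrite ltxx.
have hr k : inCC (r k).
  rewrite /r; case: ifP => // g; split; last exact: notmic.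
  by move=> m; exact: (hdd (k, m)).
have sumle : \sum_(k < K) a k <= SA.
  apply: (@le_trans _ _ (\sum_(k < K) bz zs k * rho (rz zs k))).
    apply: ler_sum => k _; rewrite /a; case: ifP => // _.
    apply: mulr_ge0; [exact: (hb0 k) | exact: rho_ge0].
  by rewrite ler_pdivlMr // mulrC.
have Y := Ybound a r ha hr sumle.
have Hobj : objT R M N K c fs kappa mic x a r <= Fx zs.
  pose y m n := x m n - Gam a r m n.
  pose w m n := \sum_(k < K) (if good k then 0 else bz zs k * hh m n (rz zs k)).
  have split_eq m n : \sum_(k < K) bz zs k * hh m n (rz zs k) = Gam a r m n + w m n.
    rewrite /GammaK /w -big_split /=; apply: eq_bigr => k _.
    rewrite /a /r; case: ifP => g; last by rewrite mul0r add0r.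
    by rewrite hh_gamma ?addr0 ?mulrA //; exact: notmic.
  rewrite /objT norm2_sq /FF; apply: ler_wpM2l; first by rewrite invr_ge0.
  rewrite (_ : (fun m n => x m n - \sum_(k < K) bz zs k * hh m n (rz zs k)) =
               (fun m n => y m n - w m n)); last first.
    by apply: funext => m; apply: funext => n; rewrite split_eq /y opprD addrA.
  apply: SS_split.
  rewrite (eq_bigr (fun m => \sum_(k < K) \sum_(n < N) y m n *
      (if good k then 0 else bz zs k * hh m n (rz zs k)))); last first.
    move=> m _; rewrite exchange_big /=; apply: eq_bigr => n _; by rewrite mulr_sumr.
  rewrite exchange_big /=; apply: sumr_le0 => k _.
  have [g|g] := boolP (good k).
    by rewrite big1 // => m _; rewrite big1 // => n _; rewrite mulr0.
  have rho0 : rho (rz zs k) = 0.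
    by apply/eqP; rewrite eq_le rho_ge0 andbT leNgt.
  apply: sumr_le0 => m _.
  under eq_bigr do rewrite (hh_rho0 rho0).
  have [_|_] := eqVneq (dd (rz zs k) m) 0; last by rewrite big1 // => n _; rewrite !mulr0.
  rewrite (eq_bigr (fun n => bz zs k / (4 * pi) * (y m n * kappa (n%:R / fs)))); last first.
    by move=> n _; ring.
  rewrite -mulr_sumr; apply: mulr_ge0_le0; last exact: Y.
  by apply: divr_ge0; [exact: (hb0 k) | apply: ltW; exact: pi4_gt0].
have Fzs0 : Fx zs <= 2^-1 * X ^+ 2 by rewrite -Fz0; apply: Hmin; rewrite inE.
exists a, r; split; first exact: ha; split; first exact: hr.
move=> a' r' ha' hr'; apply: le_trans Hobj _.
rewrite /objT norm2_sq.
have [big|small] := leP (SS R M N (fun m n => x m n - Gam a' r' m n)) (SS R M N x); last first.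
  apply: le_trans Fzs0 _; rewrite norm2_sq; apply: ler_wpM2l; first by rewrite invr_ge0.
  exact: ltW.
have hn := SS_sub_bound big.
have rho'0 k : 0 < rho (r' k) := rho_gt0 (proj2 (hr' k)).
pose z' : ZZ R K := fun p => if p.2 is Some i then r' p.1 i else a' p.1 / rho (r' p.1).
have Dz' : D z'.
  split; [split; [split|]|].
  - move=> k _ /=; apply: divr_ge0; [exact: ha' | exact: ltW].
  - by move=> k _ /=; rewrite ler_pdivrMr //; exact: HB0.
  - by move=> p _ /=; exact: (proj1 (hr' p.1) p.2).
  - rewrite /= (eq_bigr (fun k => a' k)); last first.
      by move=> k _; rewrite /bz /= divfK // gt_eqF.
    apply: le_trans hn; exact: Hamp.
have Fz' : Fx z' = 2^-1 * SS R M N (fun m n => x m n - Gam a' r' m n).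
  rewrite /FF; congr (_ * _); rewrite /SS; apply: eq_bigr => m _; apply: eq_bigr => n _.
  congr ((_ - _) ^+ 2); rewrite /GammaK; apply: eq_bigr => k _.
  rewrite /bz /rz /= (@hh_gamma R c fs M N mic kappa m n (r' k) (proj2 (hr' k))).
  by rewrite mulrA divfK // gt_eqF.
by rewrite -Fz'; apply: Hmin; rewrite inE.
Qed.

End Thm.

Theorem theorem1 (R : realType) (c fs : R) (M N K : nat)
  (mic : 'I_M -> pt3 R) (kappa : R -> R) (x : 'I_M -> 'I_N -> R) (C : R) :
  0 < c -> 0 < fs -> (1 <= M)%N -> (1 <= N)%N -> (1 <= K)%N ->
  continuous kappa -> 0 < kappa 0 ->
  kappa t @[t --> +oo] --> 0 -> kappa t @[t --> -oo] --> 0 ->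
  0 < C -> amplitude_lower_bounded R M N K c fs kappa mic C ->
  (exists r0 : pt3 R, inC R M N c fs mic r0) ->
  ((phi R N c fs kappa < 0 /\
      forall m : 'I_M, mu R M N fs kappa x m <= 2 / C * phi R N c fs kappa * norm2 R M N x)
   \/ (0 <= phi R N c fs kappa /\ forall m : 'I_M, mu R M N fs kappa x m <= 0)) ->
  exists (a : 'I_K -> R) (r : 'I_K -> pt3 R),
    (forall k, 0 <= a k) /\ (forall k, inC R M N c fs mic (r k)) /\
    forall (a' : 'I_K -> R) (r' : 'I_K -> pt3 R),
      (forall k, 0 <= a' k) -> (forall k, inC R M N c fs mic (r' k)) ->
      objT R M N K c fs kappa mic x a r <= objT R M N K c fs kappa mic x a' r'.
Proof.
move=> c0 fs0 M1 N1 K1 kc k0 _ kninf C0 Hamp [r0 hr0] Hcase.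
have H := (@main_thm R c fs M N K mic kappa x C c0 fs0 M1 N1 kc k0 kninf C0 Hamp Hcase r0 hr0). exact H.
Qed.
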